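(* There exists a dense subset $P \subseteq \mathbb{R}$ such that neither the difference set $P-P=\{x-y : x,y\in P\}$ nor the difference set $P^c-P^c=\{x-y : x,y\in \mathbb{R}\setminus P\}$ contains any interval of $\mathbb{R}$ of positive length.
   Context: $P^c=\mathbb{R}\setminus P$ denotes the complement of $P$ in $\mathbb{R}$. *)

(* Defs.v *)
From Stdlib Require Import Reals.
Open Scope R_scope.

Definition dense_in_R (P : R -> Prop) : Prop :=
  forall a b : R, a < b -> exists x : R, a < x < b /\ P x.

Definition diff_set (S : R -> Prop) : R -> Prop :=
  fun z => exists x y : R, S x /\ S y /\ z = x - y.

Definition complR (P : R -> Prop) : R -> Prop := fun x => ~ P x.

Definition contains_interval (S : R -> Prop) : Prop :=
  exists a b : R, a < b /\ forall z : R, a < z < b -> S z.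

(* Main.v *)
Require Import Defs.
From Stdlib Require Import Reals.
From Stdlib Require Import ZArith Lra Lia ClassicalEpsilon FunctionalExtensionality PropExtensionality.
Open Scope R_scope.

Definition G (z : R) : Prop := exists (k : nat) (n : Z), z * 3 ^ k = IZR n.
Definition H (z : R) : Prop := exists (k : nat) (n : Z), z * 3 ^ k = IZR (2 * n).

Lemma pow3 k : 3 ^ k = IZR (3 ^ Z.of_nat k).
Proof. rewrite <- pow_IZR. reflexivity. Qed.

Lemma pow3_pos k : 0 < 3 ^ k.
Proof. apply pow_lt; lra. Qed.

Lemma odd3 k : Z.odd (3 ^ Z.of_nat k) = true.
Proof.
  induction k as [|k IH]; [reflexivity|].
  rewrite Nat2Z.inj_succ, Z.pow_succ_r by lia.
  rewrite Z.odd_mul, IH; reflexivity.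
Qed.

Lemma G_sub x y : G x -> G y -> G (x - y).
Proof.
  intros [k [n Hn]] [j [m Hm]].
  exists (k + j)%nat, (n * 3 ^ Z.of_nat j - m * 3 ^ Z.of_nat k)%Z.
  rewrite minus_IZR, !mult_IZR, <- !pow3, pow_add.
  rewrite <- Hn, <- Hm. ring.
Qed.

Lemma H_sub x y : H x -> H y -> H (x - y).
Proof.
  intros [k [n Hn]] [j [m Hm]].
  exists (k + j)%nat, (n * 3 ^ Z.of_nat j - m * 3 ^ Z.of_nat k)%Z.
  rewrite mult_IZR, minus_IZR, !mult_IZR, <- !pow3, pow_add.
  rewrite mult_IZR in Hn, Hm.
  replace (x - y) with (x - y) by ring.
  transitivity (x * 3 ^ k * 3 ^ j - y * 3 ^ j * 3 ^ k); [ring|].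
  rewrite Hn, Hm. ring.
Qed.

Lemma H_G x : H x -> G x.
Proof. intros [k [n Hn]]; exists k, (2 * n)%Z; exact Hn. Qed.

Lemma G0 : G 0.
Proof. exists 0%nat, 0%Z; simpl; ring. Qed.

Lemma GnotH_odd a : G a -> ~ H a -> exists k n, a * 3 ^ k = IZR n /\ Z.odd n = true.
Proof.
  intros [k [n Hn]] Hna. exists k, n; split; auto.
  destruct (Z.odd n) eqn:E; auto.
  exfalso; apply Hna. exists k, (Z.div2 n).
  rewrite Hn. f_equal. rewrite (Z.div2_odd n) at 1. rewrite E; simpl Z.b2z; lia.
Qed.

Lemma odd_notH d k n : d * 3 ^ k = IZR n -> Z.odd n = true -> ~ H d.
Proof.
  intros Hd Hodd [j [m Hm]].
  assert (E : IZR (n * 3 ^ Z.of_nat j) = IZR (2 * m * 3 ^ Z.of_nat k)).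
  { rewrite !mult_IZR, <- !pow3, <- Hd. rewrite mult_IZR in Hm.
    rewrite <- Hm. ring. }
  apply eq_IZR in E. apply (f_equal Z.odd) in E.
  rewrite !Z.odd_mul, Hodd, odd3 in E. simpl in E. discriminate.
Qed.

Lemma GH_diff a b : G a -> ~ H a -> G b -> ~ H b -> H (a - b).
Proof.
  intros Ga Ha Gb Hb.
  destruct (GnotH_odd a Ga Ha) as [k [n [Hn On]]].
  destruct (GnotH_odd b Gb Hb) as [j [m [Hm Om]]].
  set (t := (n * 3 ^ Z.of_nat j - m * 3 ^ Z.of_nat k)%Z).
  assert (Et : Z.odd t = false).
  { unfold t. rewrite Z.odd_sub, !Z.odd_mul, On, Om, !odd3. reflexivity. }
  exists (k + j)%nat, (Z.div2 t).
  assert (Tt : t = (2 * Z.div2 t)%Z).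
  { rewrite (Z.div2_odd t) at 1. rewrite Et; simpl Z.b2z; lia. }
  rewrite <- Tt. unfold t.
  rewrite minus_IZR, !mult_IZR, <- !pow3, pow_add.
  transitivity (a * 3 ^ k * 3 ^ j - b * 3 ^ j * 3 ^ k); [ring|].
  rewrite Hn, Hm. ring.
Qed.

Lemma pow3_ge k : INR k + 1 <= 3 ^ k.
Proof.
  induction k as [|k IH]; [simpl; lra|].
  rewrite S_INR. simpl. assert (0 <= INR k) by apply pos_INR. lra.
Qed.

Lemma dense_Z3 a b (bb : bool) : a < b ->
  exists k n, Z.odd n = bb /\ a < IZR n / 3 ^ k < b.
Proof.
  intros Hab.
  destruct (archimed (2 / (b - a))) as [Hu _].
  assert (Hup : (0 <= up (2 / (b - a)))%Z).
  { apply le_IZR. assert (0 < 2 / (b - a)) by (apply Rdiv_lt_0_compat; lra). lra. }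
  set (k := Z.to_nat (up (2 / (b - a)))).
  assert (Hk : 2 / (b - a) < 3 ^ k).
  { pose proof (pow3_ge k). unfold k in *. rewrite INR_IZR_INZ, Z2Nat.id in H0 by lia. lra. }
  assert (Hk' : 2 < 3 ^ k * (b - a)).
  { apply (Rmult_lt_compat_r (b - a)) in Hk; [|lra].
    unfold Rdiv in Hk. rewrite Rmult_assoc, Rinv_l in Hk by lra. lra. }
  pose proof (pow3_pos k) as Hp.
  destruct (archimed (3 ^ k * a)) as [H1 H2].
  set (n0 := up (3 ^ k * a)) in *.
  assert (exists n, Z.odd n = bb /\ 3 ^ k * a < IZR n <= 3 ^ k * a + 2) as [n [On Hn]].
  { destruct (Bool.bool_dec (Z.odd n0) bb).
    - exists n0; split; auto; lra.
    - exists (n0 + 1)%Z; split.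
      + rewrite Z.odd_add. destruct (Z.odd n0), bb; simpl in *; congruence.
      + rewrite plus_IZR; lra. }
  exists k, n; split; auto.
  split.
  - apply (Rmult_lt_reg_r (3 ^ k)); auto. unfold Rdiv.
    rewrite Rmult_assoc, Rinv_l by lra. lra.
  - apply (Rmult_lt_reg_r (3 ^ k)); auto. unfold Rdiv.
    rewrite Rmult_assoc, Rinv_l by lra. lra.
Qed.

Definition V (x : R) : R := epsilon (inhabits 0) (fun y => G (x - y)).
Definition PP (x : R) : Prop := H (x - V x).

Lemma V_spec x : G (x - V x).
Proof.
  unfold V. apply epsilon_spec. exists x. replace (x - x) with 0 by ring. exact G0.
Qed.

Lemma V_eq x y : G (x - y) -> V x = V y.
Proof.
  intros Gxy. unfold V. f_equal. apply functional_extensionality. intro w.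
  apply propositional_extensionality. split; intro Hw.
  - replace (y - w) with ((x - w) - (x - y)) by ring. apply G_sub; auto.
  - replace (x - w) with ((x - y) - (0 - (y - w))) by ring.
    apply G_sub; auto. apply G_sub; auto. exact G0.
Qed.

Lemma odd_G d k n : IZR n / 3 ^ k = d -> d * 3 ^ k = IZR n.
Proof.
  intros <-. pose proof (pow3_pos k). unfold Rdiv. rewrite Rmult_assoc, Rinv_l by lra. ring.
Qed.

Theorem mainTheorem1 :
  exists P : R -> Prop,
    dense_in_R P /\
    ~ contains_interval (diff_set P) /\
    ~ contains_interval (diff_set (complR P)).
Proof.
  exists PP. split; [|split].
  - intros a b Hab.
    destruct (dense_Z3 (a - V 0) (b - V 0) false) as [k [n [On Hn]]]; [lra|].
    set (h := IZR n / 3 ^ k) in *.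
    assert (Gh : G h) by (exists k, n; apply odd_G; reflexivity).
    assert (Hh : H h).
    { exists k, (Z.div2 n). rewrite (odd_G h k n) by reflexivity. f_equal.
      rewrite (Z.div2_odd n) at 1. rewrite On; simpl Z.b2z; lia. }
    exists (V 0 + h). split; [lra|].
    unfold PP.
    assert (E : V (V 0 + h) = V 0).
    { apply V_eq. replace (V 0 + h - 0) with (h - (0 - V 0)) by ring.
      apply G_sub; auto. apply V_spec. }
    rewrite E. replace (V 0 + h - V 0) with h by ring. exact Hh.
  - intros [a [b [Hab Hin]]].
    destruct (dense_Z3 a b true) as [k [n [On Hn]]]; auto.
    destruct (Hin _ Hn) as [x [y [Px [Py Ed]]]].
    set (d := IZR n / 3 ^ k) in *.
    assert (Dd : d * 3 ^ k = IZR n) by (apply odd_G; reflexivity).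
    apply (odd_notH d k n Dd On).
    assert (Gd : G d) by (exists k, n; exact Dd).
    assert (E : V x = V y) by (apply V_eq; rewrite <- Ed; auto).
    unfold PP in Px, Py. rewrite Ed.
    replace (x - y) with ((x - V x) - (y - V y)) by (rewrite E; ring).
    apply H_sub; auto.
  - intros [a [b [Hab Hin]]].
    destruct (dense_Z3 a b true) as [k [n [On Hn]]]; auto.
    destruct (Hin _ Hn) as [x [y [Px [Py Ed]]]].
    set (d := IZR n / 3 ^ k) in *.
    assert (Dd : d * 3 ^ k = IZR n) by (apply odd_G; reflexivity).
    apply (odd_notH d k n Dd On).
    assert (Gd : G d) by (exists k, n; exact Dd).
    assert (E : V x = V y) by (apply V_eq; rewrite <- Ed; auto).
    unfold complR, PP in Px, Py. rewrite Ed.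
    replace (x - y) with ((x - V x) - (y - V y)) by (rewrite E; ring).
    apply GH_diff; auto; apply V_spec.
Qed.
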